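(* Assume $\mathrm{char}(K)\neq2,3,5$. Let $\phi$ be a $5\times5$ alternating matrix of linear forms in $x_1,\dots,x_5$ with $4\times4$ Pfaffians $p_1,\dots,p_5$. If $S(\phi)\neq0$ then the fifteen quartics $\{p_ip_j:1\le i\le j\le5\}$ are linearly independent.
   Context: $p_i=(-1)^{i+1}\mathrm{pf}(\phi^{\{i\}})$, where $\phi^{\{i\}}$ is obtained from $\phi$ by deleting the $i$th row and column. $S(\phi)=\det(\partial p_i/\partial x_j)_{i,j=1,\dots,5}$, a quintic form in $x_1,\dots,x_5$. *)

(* Defs.v *)
From HB Require Import structures.
From mathcomp Require Import all_boot all_order all_algebra.
From mathcomp Require Import mpoly.
Set Implicit Arguments. Unset Strict Implicit. Unset Printing Implicit Defensive.
Import GRing.Theory.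
Local Open Scope ring_scope.

Definition pf4 (R : comRingType) (M : 'M[R]_4) : R :=
  M 0 1 * M 2 3 - M 0 2 * M 1 3 + M 0 3 * M 1 2.

Definition del5 (R : Type) (phi : 'M[R]_5) (i : 'I_5) : 'M[R]_4 :=
  \matrix_(a < 4, b < 4) phi (lift i a) (lift i b).

(* p_i = (-1)^(i+1) pf(phi^{i}) with 1-based i; here i is 0-based, so
   the sign is (-1)^i. *)
Definition pfaff5 (R : comRingType) (phi : 'M[R]_5) (i : 'I_5) : R :=
  (-1) ^+ i * pf4 (del5 phi i).

Definition alternating (R : ringType) n (phi : 'M[R]_n) : Prop :=
  (forall i j, phi i j = - phi j i) /\ (forall i, phi i i = 0).

Definition Sinv (K : fieldType) (phi : 'M[{mpoly K[5]}]_5) : {mpoly K[5]} :=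
  \det (\matrix_(i < 5, j < 5) mderiv j (pfaff5 phi i)).

(* Main.v *)
Require Import Defs.
From HB Require Import structures.
From mathcomp Require Import all_boot all_order all_algebra.
From mathcomp Require Import mpoly.
Import GRing.Theory.
Local Open Scope ring_scope.

Section Aux.
Variable K : fieldType.
Variable p : 'I_5 -> {mpoly K[5]}.
Hypothesis hS : \det (\matrix_(i < 5, j < 5) mderiv j (p i)) != 0.

Lemma dsum (k : 'I_5) (F : 'I_5 -> {mpoly K[5]}) :
  mderiv k (\sum_i F i) = \sum_i mderiv k (F i).
Proof. exact: raddf_sum. Qed.

Lemma kill (w : 'I_5 -> {mpoly K[5]}) :
  (forall k, \sum_m w m * mderiv k (p m) = 0) -> forall m, w m = 0.
Proof.
move=> H m.
set J := \matrix_(i < 5, j < 5) mderiv j (p i).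
set v := \row_(m0 < 5) w m0.
have H1 : v *m J = 0.
  apply/rowP => k; rewrite !mxE -[RHS](H k); apply: eq_bigr => i _.
  by rewrite !mxE.
have : v *m (J *m \adj J) = 0 by rewrite mulmxA H1 mul0mx.
rewrite mul_mx_adj mul_mx_scalar => /rowP/(_ m); rewrite !mxE => /eqP.
by rewrite mulf_eq0 (negbTE hS) /= => /eqP.
Qed.

Lemma lin_kill (e : 'I_5 -> K) :
  \sum_j e j *: p j = 0 -> forall j, e j = 0.
Proof.
move=> H j.
suff : (e j)%:MP = 0 :> {mpoly K[5]} by move/eqP; rewrite mpolyC_eq0 => /eqP.
apply: (@kill (fun j => (e j)%:MP)) => k.
have := congr1 (mderiv k) H; rewrite dsum mderiv0 => E; rewrite -[RHS]E.
by apply: eq_bigr => i _; rewrite mul_mpolyC mderivZ.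
Qed.

Lemma quad_kill (d : 'I_5 -> 'I_5 -> K) :
  \sum_i \sum_j d i j *: (p i * p j) = 0 ->
  forall m j, d m j + d j m = 0.
Proof.
move=> H m.
apply: lin_kill; move: m; apply: kill => k.
have := congr1 (mderiv k) H; rewrite dsum mderiv0 => E; rewrite -[RHS]E.
under [RHS]eq_bigr do rewrite dsum.
under [RHS]eq_bigr do under eq_bigr do rewrite mderivZ mderivM scalerDr.
under [RHS]eq_bigr do rewrite big_split.
rewrite [RHS]big_split /=.
under eq_bigr do rewrite mulr_suml.
under eq_bigr do under eq_bigr do rewrite scalerDl mulrDl.
under eq_bigr do rewrite big_split.
rewrite big_split /=; congr (_ + _).
  apply: eq_bigr => i _; apply: eq_bigr => j _.
  by rewrite -scalerAl mulrC.
rewrite exchange_big; apply: eq_bigr => i _; apply: eq_bigr => j _.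
by rewrite -scalerAl.
Qed.
End Aux.

Theorem lemma8p3 (K : fieldType)
  (hchar : [/\ (2 \notin [pchar K])%N, (3 \notin [pchar K])%N & (5 \notin [pchar K])%N])
  (phi : 'M[{mpoly K[5]}]_5)
  (hlin : forall i j, phi i j \is 1.-homog)
  (halt : alternating phi)
  (hS : Sinv phi != 0) :
  forall c : 'I_5 -> 'I_5 -> K,
    \sum_(i < 5) \sum_(j < 5 | (i <= j)%N) c i j *: (pfaff5 phi i * pfaff5 phi j) = 0 ->
    forall i j : 'I_5, (i <= j)%N -> c i j = 0.
Proof.
move=> c H i j hij.
pose d (a b : 'I_5) := if (a <= b)%N then c a b else 0.
have H' : \sum_a \sum_b d a b *: (pfaff5 phi a * pfaff5 phi b) = 0.
  rewrite -[RHS]H; apply: eq_bigr => a _; rewrite [RHS]big_mkcond.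
  by apply: eq_bigr => b _; rewrite /d; case: ifP => //; rewrite scale0r.
have := @quad_kill K (pfaff5 phi) hS d H' i j; rewrite /d hij.
case: (ltngtP i j) hij => // [lt|eq] _.
  by rewrite addr0.
have eij : i = j by apply: val_inj.
subst j.
move=> /eqP; rewrite -mulr2n -mulr_natr mulf_eq0 => /orP[/eqP//|h2].
case: hchar => h _ _; move: h; rewrite inE /=.
by rewrite h2.
Qed.
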